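(* For every $m\ge 2$, the determinant of the $m$th order $2$-dimensional Pascal tensor satisfies $f(m,2)=\left[(m-1)!\right]^m$.
   Context: The $m$th order $n$-dimensional Pascal tensor is $\mathcal{P}=(p_{i_1\dots i_m})$ with $p_{i_1\dots i_m}=\frac{(i_1+\dots+i_m-m)!}{(i_1-1)!\cdots(i_m-1)!}$, $i_1,\dots,i_m\in\{1,\dots,n\}$ (for $m=2$ the symmetric Pascal matrix, with ordinary determinant). The determinant of a symmetric tensor $\mathcal{A}$ is the resultant of the system $\mathcal{A}\mathbf{x}^{m-1}=\mathbf{0}$, where $(\mathcal{A}\mathbf{x}^{m-1})_i=\sum_{i_2,\dots,i_m}a_{i i_2\dots i_m}x_{i_2}\cdots x_{i_m}$; $f(m,n)$ denotes $\det(\mathcal{P})$. For $n=2$ this is the Sylvester resultant of the two binary forms $(\mathcal{P}\mathbf{x}^{m-1})_1=\sum_{k=0}^{m-1}a_kx_1^{m-1-k}x_2^k$ and $(\mathcal{P}\mathbf{x}^{m-1})_2=\sum_{k=0}^{m-1}b_kx_1^{m-1-k}x_2^k$ with $a_k=\binom{m-1}{k}k!$, $b_k=\binom{m-1}{k}(k+1)!$, i.e. the determinant of the $2(m-1)\times 2(m-1)$ matrix whose first $m-1$ rows are successive right-shifts of $(a_0,\dots,a_{m-1},0,\dots,0)$ and whose last $m-1$ rows are successive right-shifts of $(b_0,\dots,b_{m-1},0,\dots,0)$. *)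

(* Defs.v *)
From mathcomp Require Import all_boot all_order all_algebra.
Set Implicit Arguments. Unset Strict Implicit. Unset Printing Implicit Defensive.
Import GRing.Theory.
Local Open Scope ring_scope.

(* Entry of the m-th order n-dimensional Pascal tensor, indices 1-based:
   p_{i_1..i_m} = (i_1+...+i_m - m)! / ((i_1-1)! ... (i_m-1)!).
   Indices are given as a sequence s of length m of values in {1..n}. *)
Definition pascal_entry (s : seq nat) : nat :=
  ((\sum_(i <- s) i) - size s)`! %/ (\prod_(i <- s) (i.-1)`!).

(* For n = 2: coefficient of x1^(m-1-k) x2^k in (P x^{m-1})_i, i in {1,2}:
   sum over index tuples (i_2..i_m) with exactly k entries equal to 2,
   i.e. 'C(m-1,k) * p_{i,1,..,1,2,..,2}. *)
Definition pascal2_coef (m i k : nat) : nat :=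
  'C(m.-1, k) * pascal_entry (i :: nseq (m.-1 - k) 1%N ++ nseq k 2%N).

(* Sylvester matrix of the two binary forms (P x^{m-1})_1 and (P x^{m-1})_2:
   size 2(m-1); row r < m-1 is the r-th right shift of (a_0..a_{m-1},0..),
   row m-1+r is the r-th right shift of (b_0..b_{m-1},0..). *)
Definition pascal2_sylvester (m : nat) : 'M[int]_((m.-1) + (m.-1)) :=
  \matrix_(r, c)
    (let i := if (r < m.-1)%N then 1%N else 2%N in
     let sh := if (r < m.-1)%N then nat_of_ord r else (r - m.-1)%N in
     if (sh <= c)%N && (c - sh <= m.-1)%N
     then (pascal2_coef m i (c - sh))%:Z else 0).

(* f(m,2) = det of the 2-dimensional m-th order Pascal tensor (resultant). *)
Definition f2 (m : nat) : int := \det (pascal2_sylvester m).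

(* Main.v *)
Require Import Defs.
From mathcomp Require Import all_boot all_order all_algebra.
From mathcomp Require Import ring zify.
Set Implicit Arguments. Unset Strict Implicit. Unset Printing Implicit Defensive.
Import GRing.Theory.
Local Open Scope ring_scope.

Lemma sum_nseq_nat k x : (\sum_(i <- nseq k x) i = k * x)%N.
Proof. elim: k => [|k IH]; first by rewrite big_nil. by rewrite /= big_cons IH mulSn. Qed.

Lemma prod_nseq1 k x : (x <= 2)%N -> (\prod_(i <- nseq k x) (i.-1)`! = 1)%N.
Proof.
move=> hx; elim: k => [|k IH]; first by rewrite big_nil.
rewrite /= big_cons IH muln1; case: x hx {IH} => [|[|[|]]] //.
Qed.

Lemma pentry1 n k : (k <= n)%N ->
  pascal_entry (1%N :: nseq (n - k) 1%N ++ nseq k 2%N) = k`!.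
Proof.
move=> hk; rewrite /pascal_entry big_cons big_cat /= !sum_nseq_nat.
rewrite big_cons big_cat /= !prod_nseq1 // size_cat !size_nseq.
have -> : (1 + ((n - k) * 1 + k * 2) - (n - k + k).+1 = k)%N by lia.
by rewrite divn1.
Qed.

Lemma pentry2 n k : (k <= n)%N ->
  pascal_entry (2%N :: nseq (n - k) 1%N ++ nseq k 2%N) = k.+1`!.
Proof.
move=> hk; rewrite /pascal_entry big_cons big_cat /= !sum_nseq_nat.
rewrite big_cons big_cat /= !prod_nseq1 // size_cat !size_nseq.
have -> : (2 + ((n - k) * 1 + k * 2) - (n - k + k).+1 = k.+1)%N by lia.
by rewrite divn1.
Qed.

Definition aa (n k : nat) : int := ('C(n, k) * k`!)%:Z.

Lemma aa_big n k : (n < k)%N -> aa n k = 0.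
Proof. by move=> h; rewrite /aa bin_small. Qed.

Lemma sumD n (G : nat -> int) i0 :
  \sum_(k < n) (k == i0 :> nat)%:R * G k = if (i0 < n)%N then G i0 else 0.
Proof.
elim: n => [|n IH]; first by rewrite big_ord0.
rewrite big_ord_recr /= IH.
case: (ltngtP i0 n) => h.
- by rewrite ltnS ltnW // mul0r addr0.
- by rewrite ltnS leqNgt h /= mul0r addr0.
- by rewrite h ltnSn mul1r add0r.
Qed.

Lemma sumD2 n (G : nat -> int) i0 :
  \sum_(k < n) (k.+1 == i0 :> nat)%:R * G k =
    if (0 < i0)%N && (i0 <= n)%N then G i0.-1 else 0.
Proof.
case: i0 => [|i0].
  by rewrite big1 // => k _; rewrite mul0r.
rewrite /= (eq_bigr (fun k : 'I_n => (k == i0 :> nat)%:R * G k)) ?sumD //.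
Qed.

Definition SA n : 'M[int]_(n, n + n) :=
  \matrix_(r, j) if (r <= j)%N then aa n (j - r) else 0.
Definition SB n : 'M[int]_(n, n + n) :=
  \matrix_(r, j) if (r <= j)%N then n.+1%:R * aa n (j - r) - aa n (j - r).+1 else 0.

Lemma bb n k : (k <= n)%N ->
  (('C(n, k) * k.+1`!)%:Z = n.+1%:R * aa n k - aa n k.+1).
Proof.
move=> hk; rewrite /aa.
have h1 := mul_bin_diag n.+1 k. rewrite /= in h1.
have h2 : ('C(n.+1, k.+1) = 'C(n, k.+1) + 'C(n, k))%N by [].
have e : (n.+1 * ('C(n, k) * k`!) = 'C(n, k) * k.+1`! + 'C(n, k.+1) * k.+1`!)%N.
  rewrite mulnA h1 factS h2; ring.
rewrite -natz; apply/eqP; rewrite eq_sym subr_eq; apply/eqP.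
by rewrite -!natz -natrM -natrD e.
Qed.

Lemma S_eq n : pascal2_sylvester n.+1 = col_mx (SA n) (SB n).
Proof.
apply/matrixP => i j; rewrite !mxE /=.
case: splitP => k hk; rewrite !mxE hk /=.
- case: (leqP k j) => hkj //=.
  case: (leqP (j - k) n) => hjk.
    by rewrite /pascal2_coef /= pentry1.
  by rewrite aa_big.
- rewrite addKn.
  case: (leqP k j) => hkj //=.
  case: (leqP (j - k) n) => hjk.
    by rewrite /pascal2_coef /= pentry2 // bb.
  by rewrite !aa_big ?subr0 ?mulr0 // ltnS ltnW.
Qed.

Definition T2l n : 'M[int]_n := \matrix_(r, j) if (r < j)%N then aa n (j - r) else 0.
Definition T2r n : 'M[int]_n := \matrix_(r, j) aa n (n + j - r).
Definition TT n : 'M[int]_(n + n) := block_mx 1%:M 0 (T2l n) (T2r n).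
Definition Cm n : 'M[int]_n := \matrix_(r, k) ((r == 0 :> nat)%:R * aa n k.+1).
Definition Zt n : 'M[int]_n := \matrix_(r, k) (k.+1 == r :> nat)%:R.
Definition EE n : 'M[int]_(n + n) :=
  block_mx 1%:M 1%:M (n.+1%:R%:M - Cm n) (n.+1%:R%:M - Zt n).

Lemma T1e n : (row_mx 1%:M 0 : 'M[int]_(n, n + n)) =
   \matrix_(r, j) (r == j :> nat)%:R.
Proof.
apply/matrixP => r j; rewrite !mxE; case: splitP => k hk; rewrite !mxE hk //.
by rewrite eqn_leq [(n + k <= r)%N]leqNgt (leq_trans (ltn_ord r) (leq_addr _ _)) andbF.
Qed.

Lemma T2e n : row_mx (T2l n) (T2r n) =
   \matrix_(r, j) if (r < j)%N then aa n (j - r) else 0.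
Proof.
apply/matrixP => r j; rewrite !mxE; case: splitP => k hk; rewrite !mxE hk //.
by rewrite (leq_trans (ltn_ord r) (leq_addr _ _)).
Qed.

Lemma CmU n : Cm n *m (\matrix_(r, j) (r == j :> nat)%:R : 'M[int]_(n, n + n)) =
  \matrix_(r, j) ((r == 0 :> nat)%:R * (if (j < n)%N then aa n j.+1 else 0)).
Proof.
apply/matrixP => r j; rewrite !mxE.
rewrite (eq_bigr (fun k : 'I_n => (k == j :> nat)%:R * ((r == 0 :> nat)%:R * aa n k.+1))).
  by rewrite (sumD n (fun k => (r == 0 :> nat)%:R * aa n k.+1) j); case: ifP; rewrite ?mulr0.
by move=> k _; rewrite !mxE mulrC.
Qed.

Lemma ZtL n : Zt n *m (\matrix_(r, j) (if (r < j)%N then aa n (j - r) else 0) : 'M[int]_(n, n + n)) =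
  \matrix_(r, j) (if (0 < r)%N && (r.-1 < j)%N then aa n (j - r.-1) else 0).
Proof.
apply/matrixP => r j; rewrite !mxE.
rewrite (eq_bigr (fun k : 'I_n => (k.+1 == r :> nat)%:R *
   (if (k < j)%N then aa n (j - k) else 0))).
  rewrite (sumD2 n (fun k => if (k < j)%N then aa n (j - k) else 0) r) (ltnW (ltn_ord r)) andbT; by case: (0 < r)%N.
by move=> k _; rewrite !mxE.
Qed.

Lemma ET n : EE n *m TT n = col_mx (SA n) (SB n).
Proof.
have -> : TT n = col_mx (row_mx 1%:M 0) (row_mx (T2l n) (T2r n)) by [].
rewrite /EE mul_block_col !mul1mx T1e T2e !mulmxBl !mul_scalar_mx CmU ZtL.
have a0 : aa n 0 = 1 by rewrite /aa bin0.
congr col_mx; apply/matrixP => r j; rewrite !mxE;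
  case: r => r hr; case: j => j hj /=.
  case: (ltngtP r j) => h.
  - by rewrite add0r.
  - by rewrite add0r.
  - by rewrite h subnn a0 addr0.
case: r hr => [|r] hr /=.
  rewrite !subn0 mul1r.
  case: j hj => [|j] hj /=.
    by rewrite hr a0 mulr0 mulr1; ring.
  case: (ltnP j.+1 n) => hjn; rewrite mulr0.
    ring.
  rewrite (aa_big (n:=n) (k:=j.+2)) ?ltnS //; ring.
rewrite mul0r subr0.
case: (ltngtP r.+1 j) => h.
- rewrite subnSK ?mulr0n; [ring | exact: ltnW].
- rewrite mulr0n; ring.
- rewrite -h subSnn subnn a0 mulr1n; ring.
Qed.

Lemma detT n : \det (TT n) = aa n n ^+ n.
Proof.
rewrite /TT det_lblock det1 mul1r det_trig.
  rewrite (eq_bigr (fun _ => aa n n)) ?prodr_const ?card_ord // => i _.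
  by rewrite mxE addnK.
apply/is_trig_mxP => i j hij; rewrite mxE aa_big //.
by rewrite -addnBA ?(ltnW hij) // -[X in (X < _)%N]addn0 ltn_add2l subn_gt0.
Qed.

Lemma detN n : \det (Cm n.+1 - Zt n.+1) = aa n.+1 n.+1.
Proof.
rewrite (expand_det_col _ ord_max) (bigD1 ord0) //= big1 ?addr0.
  rewrite !mxE /= mul1r subr0 /cofactor.
  have -> : row' ord0 (col' ord_max (Cm n.+1 - Zt n.+1)) = (-1)%:M.
    apply/matrixP => i j; rewrite !mxE /= /bump leqNgt (ltn_ord j) /= add0n add1n eqSS mul0r sub0r.
    case: (j =P i) => [->|/eqP hne]; first by rewrite !eqxx !mulr1n.
    have h1 : (j == i :> nat) = false by exact: negPf hne.
    by rewrite h1 eq_sym (negPf hne) !mulr0n ?oppr0.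
  by rewrite det_scalar add0n -exprD /= addnn -mul2n exprM sqrrN !expr1n mulr1.

move=> i hi; rewrite !mxE /=.
have h1 : (i == 0 :> nat) = false by exact: negPf hi.
have h2 : (n.+1 == i :> nat) = false by rewrite eqn_leq leqNgt (ltn_ord i).
by rewrite h1 h2 mul0r.
Qed.

Lemma detE n : \det (EE n.+1) = aa n.+1 n.+1.
Proof.
set F : 'M[int]_(n.+1 + n.+1) := block_mx 1%:M (- 1%:M) 0 1%:M.
have hF : \det F = 1 by rewrite det_ublock !det1 mulr1.
have hp : EE n.+1 *m F = block_mx 1%:M 0 (n.+2%:R%:M - Cm n.+1) (Cm n.+1 - Zt n.+1).
  rewrite /EE /F mulmx_block !mulmx1 !mulmx0 !addr0 !mulmxN !mulmx1 addNr.
  by rewrite opprB addrA subrK.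
have := congr1 determinant hp.
by rewrite det_mulmx hF mulr1 det_lblock det1 mul1r detN.
Qed.

Theorem theorem5p1 (m : nat) : (2 <= m)%N -> f2 m = ((m.-1)`! ^ m)%:Z.
Proof.
case: m => [|[|n]] // _.
rewrite /f2 S_eq -ET det_mulmx detE detT /aa binn mul1n -exprS.
by rewrite -!natz natrX.
Qed.
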